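(* If an ES combination operator $\nabla$ satisfies (ESF7) and (ESF8W), then $\nabla$ satisfies (ESF-P).
   Context: Setting: epistemic space $(\mathcal E,B,\mathcal L_{\mathcal P})$ ($\mathcal E$ nonempty, $B:\mathcal E\to$ propositional formulas over finite $\mathcal P$, image modulo equivalence exactly the consistent formulas); agents: well-ordered set $\mathcal S$; society: nonempty finite $N\subseteq\mathcal S$; $N$-profile $\Phi:N\to\mathcal E$, $E_i=\Phi(i)$, identified with $E_i$ if $N=\{i\}$; $\Phi\upharpoonright_M$ restriction; partition $\{N_1,N_2\}$: nonempty disjoint parts with union $N$. An ES combination operator maps (profile, $E$) to $\nabla(\Phi,E)\in\mathcal E$. (ESF7): $B(\nabla(\Phi\upharpoonright_{N_1},E))\wedge B(\nabla(\Phi\upharpoonright_{N_2},E))\vdash B(\nabla(\Phi,E))$ for all partitions, profiles, $E$. (ESF8W): if $B(\nabla(\Phi\upharpoonright_{N_1},E))\wedge B(\nabla(\Phi\upharpoonright_{N_2},E))\nvdash\bot$ then $B(\nabla(\Phi,E))\vdash B(\nabla(\Phi\upharpoonright_{N_1},E))\vee B(\nabla(\Phi\upharpoonright_{N_2},E))$. (ESF-P): for every society $N$, $N$-profile $\Phi$ and $E,E'\in\mathcal E$, if $\bigwedge_{i\in N}B(\nabla(E_i,E))\nvdash\bot$ and $B(\nabla(E_i,E))\wedge B(E')\vdash\bot$ for all $i\in N$, then $B(\nabla(\Phi,E))\wedge B(E')\vdash\bot$. *)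

(* Defs.v *)
From mathcomp Require Import all_boot.
Set Implicit Arguments.
Unset Strict Implicit.
Unset Printing Implicit Defensive.

Inductive formula (P : Type) : Type :=
  | FVar of P
  | FTop
  | FBot
  | FNeg of formula P
  | FAnd of formula P & formula P
  | FOr of formula P & formula P
  | FImp of formula P & formula P.

Arguments FTop {P}.
Arguments FBot {P}.

Fixpoint fsat (P : Type) (v : P -> bool) (f : formula P) : bool :=
  match f with
  | FVar p => v p
  | FTop => true
  | FBot => false
  | FNeg g => ~~ fsat v g
  | FAnd g h => fsat v g && fsat v h
  | FOr g h => fsat v g || fsat v h
  | FImp g h => fsat v g ==> fsat v h
  end.

(** Classical propositional consequence  f |- g  (P finite; by soundness and
    completeness this coincides with derivability). *)
Definition entails (P : Type) (f g : formula P) : Prop :=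
  forall v : P -> bool, fsat v f -> fsat v g.

Definition consistent (P : Type) (f : formula P) : Prop := ~ entails f FBot.

Definition fequiv (P : Type) (f g : formula P) : Prop :=
  entails f g /\ entails g f.

Definition epistemic_space (P : finType) (E : Type) (B : E -> formula P) : Prop :=
  inhabited E /\
  (forall e : E, consistent (B e)) /\
  (forall f : formula P, consistent f -> exists e : E, fequiv (B e) f).

Definition well_order (S : Type) (lt : S -> S -> Prop) : Prop :=
  (forall x, ~ lt x x) /\
  (forall x y z, lt x y -> lt y z -> lt x z) /\
  (forall x y, x = y \/ lt x y \/ lt y x) /\
  well_founded lt.

(** * Profiles.  An N-profile Phi : N -> E (N a society, i.e. a nonempty finite
    subset of S) is represented as the partial function S -> option E whose
    domain is N.  *)
Definition profile (S E : Type) := S -> option E.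

Definition in_soc (S E : Type) (Phi : profile S E) (i : S) : bool := isSome (Phi i).

Definition is_profile (S : eqType) (E : Type) (Phi : profile S E) : Prop :=
  (exists i, in_soc Phi i) /\
  (exists l : seq S, forall i, in_soc Phi i -> i \in l).

Definition restrict (S E : Type) (Phi : profile S E) (M : pred S) : profile S E :=
  fun i => if M i then Phi i else None.

(** the single-agent profile {i} |-> E_i, identified with E_i *)
Definition single (S : eqType) (E : Type) (Phi : profile S E) (i : S) : profile S E :=
  restrict Phi (pred1 i).

Definition is_partition (S E : Type) (Phi : profile S E) (N1 N2 : pred S) : Prop :=
  (exists i, N1 i) /\ (exists i, N2 i) /\
  (forall i, ~~ (N1 i && N2 i)) /\
  (forall i, in_soc Phi i = N1 i || N2 i).

Definition comb_op (S E : Type) := profile S E -> E -> E.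

Definition ESF7 (P : finType) (S : eqType) (E : Type) (B : E -> formula P) (nabla : comb_op S E) : Prop :=
  forall (Phi : profile S E), is_profile Phi ->
  forall (N1 N2 : pred S), is_partition Phi N1 N2 ->
  forall e : E,
    entails (FAnd (B (nabla (restrict Phi N1) e)) (B (nabla (restrict Phi N2) e)))
            (B (nabla Phi e)).

Definition ESF8W (P : finType) (S : eqType) (E : Type) (B : E -> formula P) (nabla : comb_op S E) : Prop :=
  forall (Phi : profile S E), is_profile Phi ->
  forall (N1 N2 : pred S), is_partition Phi N1 N2 ->
  forall e : E,
    consistent (FAnd (B (nabla (restrict Phi N1) e)) (B (nabla (restrict Phi N2) e))) ->
    entails (B (nabla Phi e))
            (FOr (B (nabla (restrict Phi N1) e)) (B (nabla (restrict Phi N2) e))).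

(** (ESF-P).  The consistency of the finite conjunction  /\_{i in N} B(nabla(E_i,E))
    is expressed as joint satisfiability of its conjuncts. *)
Definition ESFP (P : finType) (S : eqType) (E : Type) (B : E -> formula P)
    (nabla : comb_op S E) : Prop :=
  forall (Phi : profile S E), is_profile Phi ->
  forall e e' : E,
    (exists v : P -> bool, forall i, in_soc Phi i -> fsat v (B (nabla (single Phi i) e))) ->
    (forall i, in_soc Phi i -> entails (FAnd (B (nabla (single Phi i) e)) (B e')) FBot) ->
    entails (FAnd (B (nabla Phi e)) (B e')) FBot.

(* Main.v *)
Require Import Defs.
From mathcomp Require Import all_boot.
From Stdlib Require Import Classical FunctionalExtensionality.

Lemma in_soc_restrict (S E : Type) (Phi : profile S E) (M : pred S) j :
  in_soc (restrict Phi M) j = M j && in_soc Phi j.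
Proof. by rewrite /in_soc /restrict; case: (M j). Qed.

Lemma single_restrict (S : eqType) (E : Type) (Phi : profile S E) (M : pred S) j :
  M j -> single (restrict Phi M) j = single Phi j.
Proof.
move=> Mj; apply: functional_extensionality => k.
rewrite /single /restrict /=; case: eqP => // ->; by rewrite Mj.
Qed.

Section Main.
Variables (P : finType) (E : Type) (B : E -> formula P) (S : eqType) (nabla : comb_op S E).
Hypotheses (H7 : ESF7 B nabla) (H8 : ESF8W B nabla).
Variables (e e' : E) (v : P -> bool).

Lemma key (l : seq S) : forall Phi : profile S E,
  (forall i, in_soc Phi i -> i \in l) -> (exists i, in_soc Phi i) ->
  (forall i, in_soc Phi i -> fsat v (B (nabla (single Phi i) e))) ->
  (forall i, in_soc Phi i -> entails (FAnd (B (nabla (single Phi i) e)) (B e')) FBot) ->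
  fsat v (B (nabla Phi e)) /\ entails (FAnd (B (nabla Phi e)) (B e')) FBot.
Proof.
elim: l => [|a l IH] Phi Hl Hne Hv Hi.
  by case: Hne => i /Hl.
case Ha: (in_soc Phi a); last first.
  apply: IH => // i Hs; move: (Hl _ Hs); rewrite inE; case: eqP => // Ei.
  by rewrite Ei Ha in Hs.
have Hprof : is_profile Phi by split=> //; exists (a :: l).
case: (classic (exists j, in_soc Phi j /\ j != a)) => [[j [Hj Hja]]|Hno].
  set N1 := pred1 a.
  set N2 := fun k => in_soc Phi k && (k != a).
  have Hpart : is_partition Phi N1 N2.
    split; first by exists a; rewrite /N1 /= eqxx.
    split; first by exists j; rewrite /N2 Hj Hja.
    split; first by move=> k; rewrite /N1 /N2 /=; case: (k == a); rewrite ?andbF.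
    move=> k; rewrite /N1 /N2 /=; case: eqP => [->|]; first by rewrite Ha.
    by rewrite andbT.
  have E1 : restrict Phi N1 = single Phi a by [].
  have IH2 := IH (restrict Phi N2).
  have [Hv2 Hi2] : fsat v (B (nabla (restrict Phi N2) e)) /\
      entails (FAnd (B (nabla (restrict Phi N2) e)) (B e')) FBot.
    apply: IH2.
    - move=> k; rewrite in_soc_restrict /N2 => /andP [/andP [Hk Hka] _].
      by move: (Hl _ Hk); rewrite inE (negbTE Hka).
    - by exists j; rewrite in_soc_restrict /N2 Hj Hja.
    - move=> k; rewrite in_soc_restrict => /andP [Hk _].
      rewrite single_restrict //; apply: Hv; move: Hk; rewrite /N2 => /andP [] //.
    - move=> k; rewrite in_soc_restrict => /andP [Hk _].
      rewrite single_restrict //; apply: Hi; move: Hk; rewrite /N2 => /andP [] //.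
  have Hv1 := Hv a Ha; have Hi1 := Hi a Ha.
  split.
    apply: (H7 Phi Hprof N1 N2 Hpart e v); by rewrite /= E1 Hv1 Hv2.
  move=> w /= /andP [Hw He'].
  have Hc : consistent (FAnd (B (nabla (restrict Phi N1) e)) (B (nabla (restrict Phi N2) e))).
    by move=> Hc; have := Hc v; rewrite /= E1 Hv1 Hv2; move=> /(_ isT).
  move: (H8 Phi Hprof N1 N2 Hpart e Hc w Hw) => /= /orP [H|H].
    by apply: (Hi1 w); rewrite /= -E1 H He'.
  by apply: (Hi2 w); rewrite /= H He'.
have -> : Phi = single Phi a.
  apply: functional_extensionality => k; rewrite /single /restrict /=.
  case: eqP => // Hka; case Hk: (Phi k) => [x|] //; exfalso; apply: Hno.
  by exists k; split; [rewrite /in_soc Hk | apply/eqP].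
have Es : single (single Phi a) a = single Phi a.
  by apply: (@single_restrict S E Phi (pred1 a) a); rewrite /= eqxx.
by split; [apply: Hv | apply: Hi].
Qed.
End Main.

Theorem mainTheorem9 (P : finType) (E : Type) (B : E -> formula P)
  (S : eqType) (ltS : S -> S -> Prop) (nabla : comb_op S E) :
  epistemic_space B -> well_order ltS ->
  ESF7 B nabla -> ESF8W B nabla -> ESFP B nabla.
Proof.
move=> _ _ H7 H8 Phi [Hne [l Hl]] e e' [v Hv] Hi.
by case: (@key P E B S nabla H7 H8 e e' v l Phi Hl Hne Hv Hi).
Qed.
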